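(* Let $q \geq 1$ and let $k$ be a positive integer with $k < n$. Let $\boldsymbol{B}$ be a dictionary as described in the context, and assume that every signal $\boldsymbol{y}\in\mathbb{R}^D$ that admits a $k$-block-sparse representation admits a unique one. If $$\Big(k\sqrt{\frac{1+\sigma_q}{1+\epsilon_q}} + k - 1\Big)\mu_S < \frac{1-\epsilon_q}{1+\epsilon_q},$$ then for every $\Lambda_k\subseteq\{1,\dots,n\}$ with $|\Lambda_k|=k$ and every $\boldsymbol{y}\in\bigoplus_{i\in\Lambda_k}\mathcal{S}_i$, every optimal solution $\boldsymbol{c}^*$ of $P_{\ell_q/\ell_1}(\boldsymbol{y})$ satisfies $\boldsymbol{c}^*[i]=\boldsymbol{0}$ for all $i\notin\Lambda_k$; i.e. the solution of $P_{\ell_q/\ell_1}$ is equivalent to that of $P_{\ell_q/\ell_0}$.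
   Context: $\boldsymbol{B} = [\boldsymbol{B}[1]\ \cdots\ \boldsymbol{B}[n]] \in \mathbb{R}^{D\times N}$ has unit-Euclidean-norm columns, blocks $\boldsymbol{B}[i] \in \mathbb{R}^{D\times m_i}$ (possibly with linearly dependent columns); $\mathcal{S}_i = \operatorname{span}(\boldsymbol{B}[i])$ has dimension $d_i$, and $\mathcal{S}_i\cap\mathcal{S}_j = \{0\}$ for $i\ne j$. Vectors $\boldsymbol{c}\in\mathbb{R}^N$ are written $(\boldsymbol{c}[1];\dots;\boldsymbol{c}[n])$, $\boldsymbol{c}[i]\in\mathbb{R}^{m_i}$. A $k$-block-sparse representation of $\boldsymbol{y}$ is $\boldsymbol{y}=\sum_{i\in\Lambda}\boldsymbol{s}_i$ with $|\Lambda|\le k$, $\boldsymbol{s}_i\in\mathcal{S}_i\setminus\{0\}$; uniqueness means any two have the same $\Lambda$ and the same $\boldsymbol{s}_i$. $P_{\ell_q/\ell_1}(\boldsymbol{y})$: $\min \sum_i \|\boldsymbol{c}[i]\|_q$ s.t. $\boldsymbol{y}=\boldsymbol{B}\boldsymbol{c}$; $P_{\ell_q/\ell_0}(\boldsymbol{y})$: minimize the number of nonzero blocks $\boldsymbol{c}[i]$ s.t. $\boldsymbol{y}=\boldsymbol{B}\boldsymbol{c}$. Subspace coherence: $\mu(\mathcal{S}_i,\mathcal{S}_j)=\max_{0\ne\boldsymbol{x}\in\mathcal{S}_i,\,0\ne\boldsymbol{z}\in\mathcal{S}_j}\frac{|\boldsymbol{x}^\top\boldsymbol{z}|}{\|\boldsymbol{x}\|_2\|\boldsymbol{z}\|_2}$;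 mutual subspace coherence $\mu_S=\max_{i\ne j}\mu(\mathcal{S}_i,\mathcal{S}_j)$. $\epsilon_q$: the smallest constant such that for every $i$ there is a full column-rank submatrix $\bar{\boldsymbol{B}}[i]\in\mathbb{R}^{D\times d_i}$ of $\boldsymbol{B}[i]$ with $(1-\epsilon_q)\|\bar{\boldsymbol{c}}\|_q^2 \le \|\bar{\boldsymbol{B}}[i]\bar{\boldsymbol{c}}\|_2^2 \le (1+\epsilon_q)\|\bar{\boldsymbol{c}}\|_q^2$ for all $\bar{\boldsymbol{c}}\in\mathbb{R}^{d_i}$. $\sigma_q$: the smallest constant such that $\|\boldsymbol{B}[i]\boldsymbol{c}[i]\|_2^2\le(1+\sigma_q)\|\boldsymbol{c}[i]\|_q^2$ for all $i$ and all $\boldsymbol{c}[i]$. *)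

(* Defs.v *)
From HB Require Import structures.
From mathcomp Require Import all_boot all_order all_algebra.
From mathcomp Require Import boolp classical_sets reals exp.
Set Implicit Arguments. Unset Strict Implicit. Unset Printing Implicit Defensive.
Import Order.TTheory GRing.Theory Num.Theory.
Local Open Scope ring_scope.
Local Open Scope classical_set_scope.

Definition normq (R : realType) (p : nat) (q : R) (c : 'cV[R]_p) : R :=
  (\sum_(j < p) `|c j 0| `^ q) `^ q^-1.

Definition norm2 (R : realType) (p : nat) (c : 'cV[R]_p) : R :=
  Num.sqrt (\sum_(j < p) c j 0 ^+ 2).

Definition inSpan (R : realType) (D p : nat) (A : 'M[R]_(D, p)) (x : 'cV[R]_D) : Prop :=
  exists c : 'cV[R]_p, x = A *m c.

Definition coherence (R : realType) (D p1 p2 : nat)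
    (A1 : 'M[R]_(D, p1)) (A2 : 'M[R]_(D, p2)) : R :=
  sup [set t : R | exists (x z : 'cV[R]_D), [/\ inSpan A1 x, x != 0, inSpan A2 z, z != 0 &
        t = `|\sum_(r < D) x r 0 * z r 0| / (norm2 x * norm2 z)]].

Definition mu_S (R : realType) (D n : nat) (m : 'I_n -> nat)
    (B : forall i : 'I_n, 'M[R]_(D, m i)) : R :=
  \big[Num.max/0]_(i < n) \big[Num.max/0]_(j < n | j != i) coherence (B i) (B j).

(* epsilon_q: smallest constant such that every block has a full column-rank
   d_i-column submatrix satisfying the two-sided bound (d_i = dim S_i = rank B[i]) *)
Definition eps_q (R : realType) (D n : nat) (m : 'I_n -> nat)
    (B : forall i : 'I_n, 'M[R]_(D, m i)) (q : R) : R :=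
  inf [set e : R | forall i : 'I_n, exists f : 'I_(\rank (B i)) -> 'I_(m i),
        \rank (colsub f (B i)) = \rank (B i) /\
        forall cb : 'cV[R]_(\rank (B i)),
          (1 - e) * normq q cb ^+ 2 <= norm2 (colsub f (B i) *m cb) ^+ 2 /\
          norm2 (colsub f (B i) *m cb) ^+ 2 <= (1 + e) * normq q cb ^+ 2].

Definition sigma_q (R : realType) (D n : nat) (m : 'I_n -> nat)
    (B : forall i : 'I_n, 'M[R]_(D, m i)) (q : R) : R :=
  inf [set s : R | forall (i : 'I_n) (c : 'cV[R]_(m i)),
        norm2 (B i *m c) ^+ 2 <= (1 + s) * normq q (c) ^+ 2].

Definition Bmul (R : realType) (D n : nat) (m : 'I_n -> nat)
    (B : forall i : 'I_n, 'M[R]_(D, m i)) (c : forall i : 'I_n, 'cV[R]_(m i)) : 'cV[R]_D :=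
  \sum_(i < n) B i *m c i.

Definition kbs_rep (R : realType) (D n : nat) (m : 'I_n -> nat)
    (B : forall i : 'I_n, 'M[R]_(D, m i)) (k : nat) (y : 'cV[R]_D)
    (L : {set 'I_n}) (s : 'I_n -> 'cV[R]_D) : Prop :=
  [/\ (#|L| <= k)%N,
      (forall i, i \in L -> inSpan (B i) (s i) /\ s i != 0) &
      y = \sum_(i in L) s i].

Definition unique_kbs (R : realType) (D n : nat) (m : 'I_n -> nat)
    (B : forall i : 'I_n, 'M[R]_(D, m i)) (k : nat) : Prop :=
  forall (y : 'cV[R]_D) (L L' : {set 'I_n}) (s s' : 'I_n -> 'cV[R]_D),
    kbs_rep B k y L s -> kbs_rep B k y L' s' ->
    L = L' /\ (forall i, i \in L -> s i = s' i).

Definition in_block_sum (R : realType) (D n : nat) (m : 'I_n -> nat)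
    (B : forall i : 'I_n, 'M[R]_(D, m i)) (L : {set 'I_n}) (y : 'cV[R]_D) : Prop :=
  exists s : 'I_n -> 'cV[R]_D,
    (forall i, i \in L -> inSpan (B i) (s i)) /\ y = \sum_(i in L) s i.

Definition lq_l1_optimal (R : realType) (D n : nat) (m : 'I_n -> nat)
    (B : forall i : 'I_n, 'M[R]_(D, m i)) (q : R) (y : 'cV[R]_D)
    (c : forall i : 'I_n, 'cV[R]_(m i)) : Prop :=
  y = Bmul B c /\
  forall c' : forall i : 'I_n, 'cV[R]_(m i), y = Bmul B c' ->
    \sum_(i < n) normq q (c i) <= \sum_(i < n) normq q (c' i).

(* Main.v *)
Require Import Defs.
From HB Require Import structures.
From mathcomp Require Import all_boot all_order all_algebra.
From mathcomp Require Import boolp classical_sets reals exp.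
From mathcomp Require Import ereal sequences measure lebesgue_stieltjes_measure lebesgue_measure lebesgue_integral hoelder.
Import Order.TTheory GRing.Theory Num.Theory.
Local Open Scope ring_scope.
Local Notation normq := Defs.normq.
Local Notation norm2 := Defs.norm2.
Local Notation inSpan := Defs.inSpan.
Local Notation coherence := Defs.coherence.
Local Notation mu_S := Defs.mu_S.
Local Notation eps_q := Defs.eps_q.
Local Notation sigma_q := Defs.sigma_q.
Local Notation Bmul := Defs.Bmul.
Local Notation kbs_rep := Defs.kbs_rep.
Local Notation unique_kbs := Defs.unique_kbs.
Local Notation in_block_sum := Defs.in_block_sum.
Local Notation lq_l1_optimal := Defs.lq_l1_optimal.
From mathcomp Require Import ring lra.
From Stdlib Require Import Classical.
Set Implicit Arguments. Unset Strict Implicit.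
Section G.
Variable R : realType.
Implicit Types (q : R).
Lemma cs (I : finType) (P : pred I) (a b : I -> R) :
  (\sum_(i | P i) a i * b i) ^+ 2 <=
  (\sum_(i | P i) a i ^+ 2) * (\sum_(i | P i) b i ^+ 2).
Proof.
set Sa := \sum_(i | P i) a i ^+ 2; set Sb := \sum_(i | P i) b i ^+ 2.
set Sab := \sum_(i | P i) a i * b i.
have H : \sum_(i | P i) \sum_(j | P j) (a i * b j - a j * b i) ^+ 2
   = 2 * (Sa * Sb - Sab ^+ 2).
  have -> : \sum_(i | P i) \sum_(j | P j) (a i * b j - a j * b i) ^+ 2 =
    \sum_(i | P i) \sum_(j | P j) (a i ^+ 2 * b j ^+ 2)
  + \sum_(i | P i) \sum_(j | P j) (a j ^+ 2 * b i ^+ 2)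
  - 2 * \sum_(i | P i) \sum_(j | P j) ((a i * b i) * (a j * b j)).
    rewrite mulr_sumr -big_split -sumrB /=; apply: eq_bigr => i _.
    rewrite mulr_sumr -big_split -sumrB /=; apply: eq_bigr => j _; ring.
  have E1 : \sum_(i | P i) \sum_(j | P j) (a i ^+ 2 * b j ^+ 2) = Sa * Sb.
    by rewrite /Sa mulr_suml; apply: eq_bigr => i _; rewrite mulr_sumr.
  have E2 : \sum_(i | P i) \sum_(j | P j) (a j ^+ 2 * b i ^+ 2) = Sa * Sb.
    by rewrite exchange_big /= E1.
  have E3 : \sum_(i | P i) \sum_(j | P j) ((a i * b i) * (a j * b j)) = Sab ^+ 2.
    by rewrite expr2 /Sab mulr_suml; apply: eq_bigr => i _; rewrite mulr_sumr.
  rewrite E1 E2 E3; ring.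
have : 0 <= \sum_(i | P i) \sum_(j | P j) (a i * b j - a j * b i) ^+ 2.
  by apply: sumr_ge0 => i _; apply: sumr_ge0 => j _; apply: sqr_ge0.
rewrite H; nra.
Qed.
Lemma normq_ge0 p q (c : 'cV[R]_p) : 0 <= normq q c.
Proof. exact: powR_ge0. Qed.

Lemma normq0 p q : 0 < q -> normq q (0 : 'cV[R]_p) = 0.
Proof.
move=> q0; rewrite /normq big1 ?powR0 ?invr_eq0 ?gt_eqF //.
by move=> j _; rewrite mxE normr0 powR0 // gt_eqF.
Qed.

Lemma normq_eq0 p q (c : 'cV[R]_p) : 0 < q -> normq q c = 0 -> c = 0.
Proof.
move=> q0 /powR_eq0_eq0 /eqP; rewrite psumr_eq0; last by move=> *; exact: powR_ge0.
move=> /allP H; apply/matrixP => i j; rewrite ord1 mxE.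
have := H i (mem_index_enum i); rewrite /= powR_eq0 normr_eq0 => /andP[/eqP -> _].
done.
Qed.

Lemma normq_powq p q (c : 'cV[R]_p) : 0 < q ->
  normq q c `^ q = \sum_(j < p) `|c j 0| `^ q.
Proof.
move=> q0; rewrite /normq -powRrM mulVf ?gt_eqF // powRr1 //.
by apply: sumr_ge0 => *; exact: powR_ge0.
Qed.

Lemma coord_le_normq p q (c : 'cV[R]_p) j : 0 < q -> `|c j 0| <= normq q c.
Proof.
move=> q0; have -> : `|c j 0| = (`|c j 0| `^ q) `^ q^-1.
  by rewrite -powRrM mulfV ?gt_eqF // powRr1.
apply: ge0_ler_powR; rewrite ?invr_ge0 ?(ltW q0) ?nnegrE ?powR_ge0 //.
  by apply: sumr_ge0 => *; exact: powR_ge0.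
rewrite (bigD1 j) //= lerDl; apply: sumr_ge0 => *; exact: powR_ge0.
Qed.

Definition dot D (x z : 'cV[R]_D) := \sum_(r < D) x r 0 * z r 0.
Arguments dot {D}.

Lemma norm2_sq D (x : 'cV[R]_D) : norm2 x ^+ 2 = dot x x.
Proof.
rewrite /norm2 sqr_sqrtr; last by apply: sumr_ge0 => *; exact: sqr_ge0.
by apply: eq_bigr => r _; rewrite expr2.
Qed.

Lemma norm2_ge0 D (x : 'cV[R]_D) : 0 <= norm2 x.
Proof. exact: sqrtr_ge0. Qed.

Lemma norm2_gt0 D (x : 'cV[R]_D) : x != 0 -> 0 < norm2 x.
Proof.
move=> x0; rewrite /norm2 sqrtr_gt0 lt_def sumr_ge0 ?andbT; last by move=> *; exact: sqr_ge0.
apply: contra x0; rewrite psumr_eq0; last by move=> *; exact: sqr_ge0.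
move=> /allP H; apply/eqP/matrixP => i j; rewrite ord1 mxE.
by have := H i (mem_index_enum i); rewrite /= sqrf_eq0 => /eqP.
Qed.

Lemma norm2_0 D : norm2 (0 : 'cV[R]_D) = 0.
Proof. by rewrite /norm2 big1 ?sqrtr0 // => r _; rewrite mxE expr0n. Qed.

Lemma dotC D (x z : 'cV[R]_D) : dot x z = dot z x.
Proof. by apply: eq_bigr => r _; rewrite mulrC. Qed.

Lemma dot_suml D (I : finType) (P : pred I) (x : I -> 'cV[R]_D) z :
  dot (\sum_(i | P i) x i) z = \sum_(i | P i) dot (x i) z.
Proof.
rewrite /dot exchange_big /=; apply: eq_bigr => r _.
by rewrite summxE mulr_suml.
Qed.

Lemma dot_sumr D (I : finType) (P : pred I) (x : I -> 'cV[R]_D) z :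
  dot z (\sum_(i | P i) x i) = \sum_(i | P i) dot z (x i).
Proof. by rewrite dotC dot_suml; apply: eq_bigr => i _; rewrite dotC. Qed.

Lemma dot_cs D (x z : 'cV[R]_D) : `|dot x z| <= norm2 x * norm2 z.
Proof.
have h := @cs 'I_D xpredT (fun r => x r 0) (fun r => z r 0).
have e : (\sum_(r < D) x r 0 ^+ 2) * (\sum_(r < D) z r 0 ^+ 2) = (norm2 x * norm2 z) ^+ 2.
  by rewrite exprMn /norm2 !sqr_sqrtr // sumr_ge0 // => *; exact: sqr_ge0.
rewrite e -/(dot x z) in h.
have P0 : 0 <= norm2 x * norm2 z by rewrite mulr_ge0 // norm2_ge0.
rewrite ler_norml; apply/andP; split; nra.
Qed.

Lemma sum_delta (I : finType) (F : I -> R) (j : I) : \sum_(l : I) F l * (l == j)%:R = F j.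
Proof.
rewrite (bigD1 j) //= eqxx mulr1 big1 ?addr0 // => l /negbTE ->; exact: mulr0.
Qed.

Definition ev p (j : 'I_p) : 'cV[R]_p := \col_l (l == j)%:R.
Arguments ev {p}.

Lemma mul_ev D p (A : 'M[R]_(D, p)) j r : (A *m ev j) r 0 = A r j.
Proof. by rewrite mxE -[RHS](@sum_delta _ (fun l => A r l) j); apply: eq_bigr => l _; rewrite mxE. Qed.

Lemma normq_ev p q (j : 'I_p) : 0 < q -> normq q (ev j) = 1.
Proof.
move=> q0; rewrite /normq (bigD1 j) //= mxE eqxx normr1 powR1 big1 ?addr0 ?powR1 //.
by move=> l /negbTE; rewrite mxE => ->; rewrite normr0 powR0 // gt_eqF.
Qed.

Lemma norm2_col1 D p (A : 'M[R]_(D, p)) j : \sum_(r < D) A r j ^+ 2 = 1 ->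
  norm2 (A *m ev j) = 1.
Proof.
move=> h; rewrite /norm2 -[X in _ = X]sqrtr1 -h; congr Num.sqrt.
by apply: eq_bigr => r _; rewrite mul_ev.
Qed.

Lemma mx_bound D p q (A : 'M[R]_(D, p)) (c : 'cV[R]_p) : 0 < q ->
  (forall j, \sum_(r < D) A r j ^+ 2 = 1) ->
  norm2 (A *m c) ^+ 2 <= (p%:R ^+ 2) * normq q c ^+ 2.
Proof.
move=> q0 hA.
have h1 : norm2 (A *m c) ^+ 2 <= \sum_(r < D) ((\sum_(j < p) A r j ^+ 2) * (\sum_(j < p) c j 0 ^+ 2)).
  rewrite /norm2 sqr_sqrtr; last by apply: sumr_ge0 => *; exact: sqr_ge0.
  apply: (@ler_sum _ _ _ xpredT) => r _.
  rewrite mxE; exact: (@cs _ xpredT (fun j => A r j) (fun j => c j 0)).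
have h2 : \sum_(r < D) ((\sum_(j < p) A r j ^+ 2) * (\sum_(j < p) c j 0 ^+ 2))
   = p%:R * (\sum_(j < p) c j 0 ^+ 2).
  rewrite -mulr_suml exchange_big /= (eq_bigr (fun _ => 1)) //.
  by rewrite sumr_const card_ord.
have h3 : \sum_(j < p) c j 0 ^+ 2 <= p%:R * normq q c ^+ 2.
  rewrite mulr_natl -[p in _ *+ p]card_ord -sumr_const; apply: ler_sum => j _.
  rewrite -real_normK ?num_real //; apply: lerXn2r; rewrite ?nnegrE ?normr_ge0 ?normq_ge0 //.
  exact: coord_le_normq.
apply: (le_trans h1); rewrite h2 expr2 -mulrA; apply: ler_wpM2l => //.
Qed.

Lemma bigmax_ge0 (I : finType) (P : pred I) (F : I -> R) :
  0 <= \big[Num.max/0]_(i | P i) F i.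
Proof. by elim/big_rec: _ => // i x _ hx; rewrite le_max hx orbT. Qed.

Lemma le_bigmax_f (I : finType) (P : pred I) (F : I -> R) j :
  P j -> F j <= \big[Num.max/0]_(i | P i) F i.
Proof. by move=> Pj; rewrite (bigD1 j) //= le_max lexx. Qed.

Lemma coh_bound D p1 p2 (A1 : 'M[R]_(D, p1)) (A2 : 'M[R]_(D, p2)) x z :
  inSpan A1 x -> inSpan A2 z ->
  `|dot x z| <= coherence A1 A2 * norm2 x * norm2 z.
Proof.
move=> hx hz.
have [->|x0] := eqVneq x 0.
  by rewrite norm2_0 mulr0 mul0r /dot big1 ?normr0 // => r _; rewrite mxE mul0r.
have [->|z0] := eqVneq z 0.
  by rewrite norm2_0 mulr0 /dot big1 ?normr0 // => r _; rewrite mxE mulr0.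
have nx := norm2_gt0 x0; have nz := norm2_gt0 z0.
have nxz : 0 < norm2 x * norm2 z by rewrite mulr_gt0.
set t := `|dot x z| / (norm2 x * norm2 z).
have Et : [set t : R | exists (x z : 'cV[R]_D), [/\ inSpan A1 x, x != 0, inSpan A2 z, z != 0 &
        t = `|\sum_(r < D) x r 0 * z r 0| / (norm2 x * norm2 z)]]%classic t.
  by exists x, z; split.
have ub : has_ubound [set t : R | exists (x z : 'cV[R]_D), [/\ inSpan A1 x, x != 0, inSpan A2 z, z != 0 &
        t = `|\sum_(r < D) x r 0 * z r 0| / (norm2 x * norm2 z)]]%classic.
  exists 1 => s [x' [z' [_ x'0 _ z'0 ->]]].
  have := norm2_gt0 x'0; have := norm2_gt0 z'0 => a b.
  rewrite ler_pdivrMr ?mulr_gt0 // mul1r; exact: dot_cs.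
have := ub_le_sup ub Et; rewrite -/(coherence A1 A2) => h.
rewrite -mulrA; rewrite /t ler_pdivrMr // in h.
Qed.

Lemma mu_bound D n (m : 'I_n -> nat) (B : forall i : 'I_n, 'M[R]_(D, m i)) i j x z :
  i != j -> inSpan (B i) x -> inSpan (B j) z ->
  `|dot x z| <= mu_S B * norm2 x * norm2 z.
Proof.
move=> ij hx hz; apply: (le_trans (coh_bound hx hz)).
rewrite -!mulrA; apply: ler_wpM2r; first by rewrite mulr_ge0 ?norm2_ge0.
have h1 := @le_bigmax_f 'I_n xpredT (fun i0 => \big[Num.max/0]_(j0 < n | j0 != i0) coherence (B i0) (B j0)) i isT.
have h2 := @le_bigmax_f 'I_n (fun j0 => j0 != i) (fun j0 => coherence (B i) (B j0)) j ltac:(by rewrite /= eq_sym).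
exact: le_trans h2 h1.
Qed.

Lemma tr_colsub D m r (A : 'M[R]_(D, m)) (f : 'I_r -> 'I_m) :
  (colsub f A)^T = rowsub f A^T.
Proof. by apply/matrixP => i j; rewrite !mxE. Qed.

Lemma span_sub D m r (A : 'M[R]_(D, m)) (f : 'I_r -> 'I_m) x :
  \rank (colsub f A) = \rank A -> inSpan A x -> exists cb, x = colsub f A *m cb.
Proof.
move=> hr [c ->].
have s1 : ((colsub f A)^T <= A^T)%MS by rewrite tr_colsub rowsub_sub.
have s2 : (A^T <= (colsub f A)^T)%MS.
  have := mxrank_leqif_sup s1; rewrite !mxrank_tr hr => -[_ <-]; by [].
have : ((A *m c)^T <= (colsub f A)^T)%MS.
  by rewrite trmx_mul; apply: submx_trans s2; exact: submxMl.
case/submxP => v hv; exists v^T.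
by rewrite -[A *m c]trmxK hv trmx_mul trmxK.
Qed.

Lemma exists_f D m (A : 'M[R]_(D, m)) :
  exists f : 'I_(\rank A) -> 'I_m, \rank (colsub f A) = \rank A.
Proof.
pose g := cast_ord (esym (mxrank_tr A)).
exists (fun j => maxrankfun A^T (g j)).
have e : (rowsub (maxrankfun A^T \o g) A^T :=: rowsub (maxrankfun A^T) A^T)%MS.
  apply: eqmx_rowsub_comp; first by rewrite mxrank_tr.
  exact: cast_ord_inj.
apply: (@etrans _ _ (\rank (rowsub (maxrankfun A^T) A^T))).
  by rewrite -[LHS]mxrank_tr tr_colsub; exact: e.1.
by rewrite (eq_maxrowsub A^T).1 mxrank_tr.
Qed.

Lemma sum_inj (r m : nat) (f : 'I_r -> 'I_m) (X : 'I_r -> R) j :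
  injective f -> \sum_(j' < r) (f j' == f j)%:R * X j' = X j.
Proof.
move=> fi; rewrite -[RHS](@sum_delta _ X j); apply: eq_bigr => j' _.
by rewrite (inj_eq fi) mulrC.
Qed.

Lemma pad D m r q (A : 'M[R]_(D, m)) (f : 'I_r -> 'I_m) (cb : 'cV[R]_r) :
  0 < q -> injective f ->
  exists ch : 'cV[R]_m, A *m ch = colsub f A *m cb /\ normq q ch = normq q cb.
Proof.
move=> q0 fi.
exists (\col_l \sum_(j < r) (f j == l)%:R * cb j 0); split.
  apply/matrixP => r0 k; rewrite ord1 !mxE.
  under eq_bigr do rewrite mxE mulr_sumr.
  rewrite exchange_big /=; apply: eq_bigr => j _; rewrite mxE.
  rewrite -[RHS](@sum_delta _ (fun l => A r0 l * cb j 0) (f j)).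
  by apply: eq_bigr => l _; rewrite eq_sym; ring.
rewrite /Defs.normq; congr (_ `^ _).
have e : forall l, `|(\col_l \sum_(j < r) (f j == l)%:R * cb j 0) l 0| `^ q
   = \sum_(j < r) (f j == l)%:R * `|cb j 0| `^ q.
  move=> l; rewrite mxE; case: (pickP (fun j => f j == l)) => [j /eqP <-|h].
    by rewrite !sum_inj.
  rewrite !big1 ?normr0 ?powR0 ?gt_eqF // => j _; by rewrite h mul0r.
under eq_bigr do rewrite e.
rewrite exchange_big /=; apply: eq_bigr => j _.
by rewrite -[RHS](@sum_delta _ (fun _ => `|cb j 0| `^ q) (f j)); apply: eq_bigr => l _; rewrite mulrC eq_sym.
Qed.

Lemma unit_colsub D m r (A : 'M[R]_(D, m)) (f : 'I_r -> 'I_m) :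
  (forall j, \sum_(k < D) A k j ^+ 2 = 1) ->
  forall j, \sum_(k < D) colsub f A k j ^+ 2 = 1.
Proof. by move=> h j; rewrite -(h (f j)); apply: eq_bigr => k _; rewrite mxE. Qed.

Lemma fin_uniform (T : finType) (P : T -> Prop) (Q : T -> R -> Prop) (c : R) :
  (forall x, P x -> exists g, 0 < g /\ forall e, e < c + g -> Q x e) ->
  exists g, 0 < g /\ forall x, P x -> forall e, e < c + g -> Q x e.
Proof.
move=> h.
suff : forall s : seq T, exists g, 0 < g /\ forall x, x \in s -> P x -> forall e, e < c + g -> Q x e.
  case/(_ (enum T)) => g [g0 hg]; exists g; split => // x Px e he.
  by apply: hg => //; rewrite mem_enum.
elim => [|x s [g1 [g10 h1]]]; first by exists 1; split.
have [g2 [g20 h2]] : exists g2, 0 < g2 /\ (P x -> forall e, e < c + g2 -> Q x e).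
  case: (classic (P x)) => [Px|nPx]; last by exists 1; split.
  by have [g [g0 hg]] := h x Px; exists g; split.
exists (Num.min g1 g2); split; first by rewrite lt_min g10 g20.
move=> y; rewrite inE => /orP[/eqP -> | ys] Py e he.
  apply: h2 => //; apply: (lt_le_trans he); rewrite lerD2l ge_min lexx orbT //.
apply: h1 => //; apply: (lt_le_trans he); rewrite lerD2l ge_min lexx //.
Qed.

Lemma sigma_prop D n (m : 'I_n -> nat) (B : forall i : 'I_n, 'M[R]_(D, m i)) q i0 :
  0 < q -> (forall (i : 'I_n) (j : 'I_(m i)), \sum_(r < D) B i r j ^+ 2 = 1) ->
  (0 < m i0)%N ->
  0 <= sigma_q B q /\
  forall i (c : 'cV[R]_(m i)), norm2 (B i *m c) ^+ 2 <= (1 + sigma_q B q) * normq q c ^+ 2.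
Proof.
move=> q0 hB hm.
rewrite /sigma_q.
set S := [set s : R | _]%classic.
have neS : (S !=set0)%classic.
  exists (\sum_(i < n) (m i)%:R ^+ 2) => i c.
  apply: (le_trans (mx_bound c q0 (hB i))); apply: ler_wpM2r; first exact: sqr_ge0.
  rewrite (bigD1 i) //=.
  have : 0 <= \sum_(i1 < n | i1 != i) (m i1)%:R ^+ 2 :> R by apply: sumr_ge0 => *; exact: sqr_ge0.
  lra.
have key : forall i (c : 'cV[R]_(m i)), norm2 (B i *m c) ^+ 2 <= (1 + inf S) * normq q c ^+ 2.
  move=> i c; have [->|c0] := eqVneq c 0.
    by rewrite mulmx0 norm2_0 normq0 // expr0n /= mulr0.
  have N0 : 0 < normq q c ^+ 2.
    rewrite exprn_gt0 // lt_def normq_ge0 andbT; apply: contra c0 => /eqP h.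
    by apply/eqP; exact: normq_eq0 h.
  have lb : (lbound S) (norm2 (B i *m c) ^+ 2 / normq q c ^+ 2 - 1).
    move=> s Ss; have := Ss i c; rewrite lerBlDl -ler_pdivrMr //.
  have h := lb_le_inf neS lb.
  have : norm2 (B i *m c) ^+ 2 / normq q c ^+ 2 <= 1 + inf S by lra.
  by rewrite ler_pdivrMr.
split=> //.
have j0 : 'I_(m i0) := Ordinal hm.
have := key i0 (ev j0); rewrite normq_ev // norm2_col1 ?hB // expr1n mulr1 lerDl //.
Qed.

Lemma margin (X N eps : R) : 0 <= N ->
  ~ ((1 - eps) * N <= X /\ X <= (1 + eps) * N) ->
  exists g, 0 < g /\ forall e, e < eps + g ->
     ~ ((1 - e) * N <= X /\ X <= (1 + e) * N).
Proof.
move=> N0 h.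
have N1 : 0 < N + 1 by lra.
case: (boolP (X < (1 - eps) * N)) => h1.
  set d := (1 - eps) * N - X.
  have d0 : 0 < d by rewrite /d subr_gt0.
  exists (d / (N + 1)); split; first by rewrite divr_gt0.
  have gd : d / (N + 1) * (N + 1) = d by rewrite mulfVK // gt_eqF.
  move: (d / (N + 1)) gd (divr_gt0 d0 N1) => g gd g0 e he [h2 _].
  have : (e - eps - g) * N <= 0 by apply: mulr_le0_ge0 => //; lra.
  rewrite /d in gd; nra.
have h2 : (1 + eps) * N < X.
  rewrite ltNge; apply/negP => h3; apply: h; split => //; by rewrite leNgt.
set d := X - (1 + eps) * N.
have d0 : 0 < d by rewrite /d subr_gt0.
exists (d / (N + 1)); split; first by rewrite divr_gt0.
have gd : d / (N + 1) * (N + 1) = d by rewrite mulfVK // gt_eqF.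
move: (d / (N + 1)) gd (divr_gt0 d0 N1) => g gd g0 e he [_ h3].
have : (e - eps - g) * N <= 0 by apply: mulr_le0_ge0 => //; lra.
rewrite /d in gd; nra.
Qed.

Lemma eps_prop D n (m : 'I_n -> nat) (B : forall i : 'I_n, 'M[R]_(D, m i)) q i0 :
  0 < q -> (forall (i : 'I_n) (j : 'I_(m i)), \sum_(r < D) B i r j ^+ 2 = 1) ->
  (0 < m i0)%N ->
  0 <= eps_q B q /\
  forall i, exists f : 'I_(\rank (B i)) -> 'I_(m i),
    \rank (colsub f (B i)) = \rank (B i) /\
    forall cb : 'cV[R]_(\rank (B i)),
      (1 - eps_q B q) * normq q cb ^+ 2 <= norm2 (colsub f (B i) *m cb) ^+ 2 /\
      norm2 (colsub f (B i) *m cb) ^+ 2 <= (1 + eps_q B q) * normq q cb ^+ 2.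
Proof.
move=> q0 hB hm.
rewrite /eps_q; set E := [set e : R | _]%classic.
have neE : (E !=set0)%classic.
  exists (1 + \sum_(i < n) (\rank (B i))%:R ^+ 2) => i.
  have [f hf] := exists_f (B i); exists f; split => // cb.
  have S0 : 0 <= \sum_(i < n) (\rank (B i))%:R ^+ 2 :> R by apply: sumr_ge0 => *; exact: sqr_ge0.
  have X0 := sqr_ge0 (norm2 (colsub f (B i) *m cb)).
  have N0 := sqr_ge0 (normq q cb).
  split.
    apply: le_trans X0; apply: mulr_le0_ge0 => //; lra.
  apply: (le_trans (mx_bound cb q0 (unit_colsub f (hB i)))); apply: ler_wpM2r => //.
  rewrite (bigD1 i) //=.
  have : 0 <= \sum_(i1 < n | i1 != i) (\rank (B i1))%:R ^+ 2 :> R by apply: sumr_ge0 => *; exact: sqr_ge0.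
  lra.
have rk : (0 < \rank (B i0))%N.
  rewrite lt0n mxrank_eq0; apply/eqP => h0; have := hB i0 (Ordinal hm); rewrite h0.
  by rewrite big1 => [/esym/eqP|r _]; rewrite ?oner_eq0 // mxE expr0n.
have lbE : (lbound E) 0.
  move=> e He; have [f [_ hb]] := He i0.
  have := (hb (ev (Ordinal rk))).1.
  by rewrite normq_ev // norm2_col1 ?(unit_colsub f (hB i0)) // expr1n mulr1; lra.
split; first exact: lb_le_inf neE lbE.
move=> i; apply: NNPP => H.
have hg : forall F : {ffun 'I_(\rank (B i)) -> 'I_(m i)},
   \rank (colsub (fun j => F j) (B i)) = \rank (B i) ->
   exists g, 0 < g /\ forall e, e < inf E + g ->
     ~ (forall cb : 'cV[R]_(\rank (B i)),
      (1 - e) * normq q cb ^+ 2 <= norm2 (colsub (fun j => F j) (B i) *m cb) ^+ 2 /\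
      norm2 (colsub (fun j => F j) (B i) *m cb) ^+ 2 <= (1 + e) * normq q cb ^+ 2).
  move=> F hF.
  have : ~ (forall cb : 'cV[R]_(\rank (B i)),
      (1 - inf E) * normq q cb ^+ 2 <= norm2 (colsub (fun j => F j) (B i) *m cb) ^+ 2 /\
      norm2 (colsub (fun j => F j) (B i) *m cb) ^+ 2 <= (1 + inf E) * normq q cb ^+ 2).
    by move=> hb; apply: H; exists (fun j => F j); split.
  move/not_all_ex_not => [cb hcb].
  have [g [g0 hg]] := margin (sqr_ge0 (normq q cb)) hcb.
  exists g; split => // e he hb; exact: (hg e he (hb cb)).
have [g [g0 hg']] := fin_uniform hg.
have [e Ee lte] : exists2 e, E e & e < inf E + g.
  by apply: inf_lt => //; rewrite ltrDl.
have [f [hf hb]] := Ee i.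
have eF : (fun j => [ffun j => f j] j) = f by apply/funext => j; rewrite ffunE.
have := hg' [ffun j => f j]; rewrite eF => /(_ hf e lte); apply; exact: hb.
Qed.

Lemma inj_of_bound D m r (A : 'M[R]_(D, m)) (f : 'I_r -> 'I_m) q eps :
  0 < q -> eps < 1 ->
  (forall cb : 'cV[R]_r, (1 - eps) * normq q cb ^+ 2 <= norm2 (colsub f A *m cb) ^+ 2) ->
  injective f.
Proof.
move=> q0 e1 hb j1 j2 hf; apply: NNPP => hne.
have := hb (ev j1 - ev j2).
have -> : colsub f A *m (ev j1 - ev j2) = 0.
  rewrite mulmxBr; apply/eqP; rewrite subr_eq0; apply/eqP.
  apply/matrixP => k l; rewrite ord1 !mul_ev !mxE hf //.
rewrite norm2_0 expr0n /=.
have cb0 : ev j1 - ev j2 != 0.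
  apply/eqP => /matrixP /(_ j1 0); rewrite !mxE eqxx.
  have -> : (j1 == j2) = false by apply/eqP.
  by move/eqP; rewrite subr0 oner_eq0.
have N0 : 0 < normq q (ev j1 - ev j2).
  rewrite lt_def normq_ge0 andbT; apply: contra cb0 => /eqP h.
  by apply/eqP; exact: normq_eq0 h.
have : 0 < (1 - eps) * normq q (ev j1 - ev j2) ^+ 2.
  by rewrite mulr_gt0 ?exprn_gt0 // subr_gt0.
lra.
Qed.

Lemma block_rep D m (A : 'M[R]_(D, m)) q eps x :
  0 < q -> eps < 1 ->
  (exists f : 'I_(\rank A) -> 'I_m, \rank (colsub f A) = \rank A /\
    forall cb : 'cV[R]_(\rank A),
      (1 - eps) * normq q cb ^+ 2 <= norm2 (colsub f A *m cb) ^+ 2 /\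
      norm2 (colsub f A *m cb) ^+ 2 <= (1 + eps) * normq q cb ^+ 2) ->
  inSpan A x ->
  exists ch : 'cV[R]_m, A *m ch = x /\
    (1 - eps) * normq q ch ^+ 2 <= norm2 x ^+ 2 /\
    norm2 x ^+ 2 <= (1 + eps) * normq q ch ^+ 2.
Proof.
move=> q0 e1 [f [hr hb]] hx.
have [cb ->] := span_sub hr hx.
have fi : injective f by apply: (inj_of_bound q0 e1) => cb'; exact: (hb cb').1.
have [ch [h1 h2]] := pad A cb q0 fi.
by exists ch; rewrite h1 h2; split => //; exact: hb.
Qed.

Definition ext p (w : 'cV[R]_p) : nat -> R :=
  fun k => if @insub nat (fun k => (k < p)%N) 'I_p k is Some i then w i 0 else 0.

Arguments ext {p}.
Lemma Lnorm_ext p (q : R) (w : 'cV[R]_p) : 0 < q ->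
  Lnorm (@counting nat R) (EFin q) (EFin \o ext w) = (normq q w)%:E.
Proof.
move=> q0; rewrite Lnorm_counting//.
rewrite (nneseries_split 0 p); last by move=> k; rewrite lee_fin powR_ge0.
rewrite add0n ereal_series_cond eseries0 ?adde0; last first.
  move=> k _ /andP[kp _]; rewrite /ext /= insubF /=; last by rewrite ltnNge kp.
  by rewrite /= normr0 powR0 // gt_eqF.
rewrite big_mkord.
rewrite sumEFin poweR_EFin /normq; congr (_ `^ _)%:E.
by apply: eq_bigr => i _ /=; rewrite /ext valK.
Qed.

Lemma minkowski_fin p (q : R) (u v : 'cV[R]_p) : 1 <= q ->
  normq q (u + v) <= normq q u + normq q v.
Proof.
move=> q1; have q0 : 0 < q by rewrite (lt_le_trans _ q1).
have mu : measurable_fun setT (fun k : nat => ext u k) by [].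
have mv : measurable_fun setT (fun k : nat => ext v k) by [].
have := @minkowski_EFin _ _ _ (@counting nat R) (ext u) (ext v) q mu mv q1.
have -> : (ext u \+ ext v)%R = ext (u + v).
  by apply/funext => k; rewrite /ext /=; case: insub => [i|]; rewrite ?mxE ?addr0.
by rewrite !Lnorm_ext // -EFinD lee_fin.
Qed.
Lemma arith (d A Bs Q ST SU mu r sv eps kR : R) :
  d <= mu * ST * SU -> 0 <= ST -> ST <= r * A -> 0 <= SU -> SU <= sv * Bs ->
  (1 - eps) * Q - mu * r ^+ 2 * (A * A - Q) <= d -> A * A <= Q * kR ->
  0 < Bs -> Bs <= A -> r ^+ 2 = 1 + eps -> 0 < r -> 0 <= sv -> 0 <= mu ->
  eps < 1 -> 1 <= kR ->
  (kR * (sv / r) + kR - 1) * mu < (1 - eps) / (1 + eps) -> False.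
Proof.
move=> h1 ST0 h2 SU0 h3 h4 h5 B0 BA hr r0 sv0 mu0 e1 k1 hc.
have pe : 0 < 1 + eps by rewrite -hr exprn_gt0.
have C1 : kR * mu * sv * r < (1 - eps) - (kR - 1) * mu * r ^+ 2.
  rewrite ltr_pdivlMr // in hc.
  have e : (kR * (sv / r) + kR - 1) * mu * (1 + eps) = kR * mu * sv * r + (kR - 1) * mu * r ^+ 2.
    rewrite -hr; field; exact: lt0r_neq0.
  rewrite e in hc; lra.
have A0 : 0 < A by lra.
have C2 : d <= mu * (r * A) * (sv * Bs).
  have P : ST * SU <= (r * A) * (sv * Bs) by apply: ler_pM.
  have P2 : mu * (ST * SU) <= mu * ((r * A) * (sv * Bs)) by apply: ler_wpM2l.
  rewrite !mulrA in h1 P2 *; lra.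
have C3 : ((1 - eps) + mu * r ^+ 2) * (A * A) - kR * mu * r ^+ 2 * (A * A) <= kR * d.
  have cpos : 0 <= (1 - eps) + mu * r ^+ 2 by rewrite addr_ge0 ?mulr_ge0 ?sqr_ge0 //; lra.
  have : ((1 - eps) + mu * r ^+ 2) * (A * A) <= ((1 - eps) + mu * r ^+ 2) * (Q * kR).
    exact: ler_wpM2l.
  nra.
have C4 : kR * d <= kR * mu * r * sv * (A * A).
  have : kR * d <= kR * (mu * (r * A) * (sv * Bs)) by apply: ler_wpM2l; [lra | exact: C2].
  have : 0 <= kR * mu * r * sv * A by rewrite !mulr_ge0 //; lra.
  nra.
have AA : 0 < A * A by rewrite mulr_gt0.
nra.
Qed.
End G.
Unset Implicit Arguments.

Theorem corollary2 (R : realType) (D n : nat) (m : 'I_n -> nat)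
    (B : forall i : 'I_n, 'M[R]_(D, m i)) (q : R) (k : nat) :
  1 <= q -> (0 < k)%N -> (k < n)%N ->
  (forall (i : 'I_n) (j : 'I_(m i)), \sum_(r < D) B i r j ^+ 2 = 1) ->
  (forall i j : 'I_n, i != j ->
     forall x : 'cV[R]_D, inSpan (B i) x -> inSpan (B j) x -> x = 0) ->
  unique_kbs B k ->
  (k%:R * Num.sqrt ((1 + sigma_q B q) / (1 + eps_q B q)) + k%:R - 1) * mu_S B
    < (1 - eps_q B q) / (1 + eps_q B q) ->
  forall L : {set 'I_n}, #|L| = k ->
  forall y : 'cV[R]_D, in_block_sum B L y ->
  forall c : forall i : 'I_n, 'cV[R]_(m i), lq_l1_optimal B q y c ->
  forall i : 'I_n, i \notin L -> c i = 0.
Proof.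
move=> q1 k0 kn hB _ _ hcond L hL y [s [hs hy]] c [hyc hopt] i0 i0L.
have q0 : 0 < q by apply: lt_le_trans q1.
case: (eqVneq (c i0) 0) => // ci0; exfalso.
have hm : (0 < m i0)%N.
  case E: (m i0) => //; exfalso; apply: (negP ci0); apply/eqP/matrixP => r j.
  have : (r < 0)%N by rewrite -E ltn_ord.
  by [].
have [sig0 hsig] := @sigma_prop _ _ _ _ B q i0 q0 hB hm.
have [eps0 heps] := @eps_prop _ _ _ _ B q i0 q0 hB hm.
set eps := eps_q B q in hcond heps eps0.
set sig := sigma_q B q in hcond hsig sig0.
set mu := mu_S B in hcond.
have mu0 : 0 <= mu by apply: bigmax_ge0.
have k1 : 1 <= k%:R :> R by rewrite ler1n.
have sq0 := sqrtr_ge0 ((1 + sig) / (1 + eps)).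
have eps1 : eps < 1.
  have : 0 < (1 - eps) / (1 + eps).
    apply: le_lt_trans hcond; apply: mulr_ge0 => //.
    have : 0 <= k%:R * Num.sqrt ((1 + sig) / (1 + eps)) :> R by apply: mulr_ge0.
    lra.
  have pe : 0 < 1 + eps by lra.
  by rewrite ltr_pdivlMr // mul0r; lra.
pose t i := s i - B i *m c i.
have ex : forall i, exists ch : 'cV[R]_(m i), i \in L -> B i *m ch = t i /\
    (1 - eps) * normq q ch ^+ 2 <= norm2 (t i) ^+ 2 /\
    norm2 (t i) ^+ 2 <= (1 + eps) * normq q ch ^+ 2.
  move=> i; case: (boolP (i \in L)) => iL; last by exists 0.
  have hx : inSpan (B i) (t i).
    by have [x hx] := hs i iL; exists (x - c i); rewrite mulmxBr -hx.
  have [ch h] := block_rep q0 eps1 (heps i) hx.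
  by exists ch.
pose ch i := proj1_sig (cid (ex i)).
have hch : forall i, i \in L -> B i *m ch i = t i /\
    (1 - eps) * normq q (ch i) ^+ 2 <= norm2 (t i) ^+ 2 /\
    norm2 (t i) ^+ 2 <= (1 + eps) * normq q (ch i) ^+ 2.
  by move=> i; exact: (proj2_sig (cid (ex i))).
have hy' : \sum_(i in L) t i = \sum_(j | j \notin L) B j *m c j.
  by rewrite /t sumrB -hy hyc /Bmul (bigID (fun i => i \in L)) /= addrAC subrr add0r.
have ht : forall i, i \in L -> inSpan (B i) (t i).
  by move=> i iL; have [x hx] := hs i iL; exists (x - c i); rewrite mulmxBr -hx.
pose r := Num.sqrt (1 + eps).
pose sv := Num.sqrt (1 + sig).
have hr : r ^+ 2 = 1 + eps by rewrite sqr_sqrtr //; lra.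
have r0 : 0 < r by rewrite sqrtr_gt0; lra.
have sv0 : 0 <= sv by apply: sqrtr_ge0.
pose a i := normq q (ch i).
pose A := \sum_(i in L) a i.
pose Q := \sum_(i in L) a i ^+ 2.
pose Bs := \sum_(j | j \notin L) normq q (c j).
have sqle : forall x z : R, 0 <= z -> x ^+ 2 <= z ^+ 2 -> x <= z by move=> x z z0 h; nra.
have hT : forall i, i \in L -> norm2 (t i) <= r * a i.
  move=> i iL; apply: sqle; first by rewrite mulr_ge0 ?normq_ge0 ?ltW.
  by rewrite exprMn hr; exact: (hch i iL).2.2.
have hU : forall j, norm2 (B j *m c j) <= sv * normq q (c j).
  move=> j; apply: sqle; first by rewrite mulr_ge0 ?normq_ge0.
  have hs2 : sv ^+ 2 = 1 + sig by rewrite sqr_sqrtr //; lra.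
  by rewrite exprMn hs2; exact: hsig.
have hup : dot (\sum_(i in L) t i) (\sum_(i in L) t i) <=
    mu * (\sum_(i in L) norm2 (t i)) * (\sum_(j | j \notin L) norm2 (B j *m c j)).
  have E : mu * (\sum_(i in L) norm2 (t i)) * (\sum_(j | j \notin L) norm2 (B j *m c j))
     = \sum_(i in L) \sum_(j | j \notin L) mu * norm2 (t i) * norm2 (B j *m c j).
    rewrite -mulrA mulr_suml mulr_sumr; apply: eq_bigr => i _.
    by rewrite mulr_sumr mulr_sumr; apply: eq_bigr => j _; rewrite mulrA.
  rewrite E {2}hy' dot_suml; apply: ler_sum => i iL.
  rewrite dot_sumr; apply: ler_sum => j jL.
  have ij : i != j by apply/eqP => e; move: jL; rewrite -e iL.
  have hz : inSpan (B j) (B j *m c j) by exists (c j).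
  apply: le_trans (ler_norm _) _; exact: (mu_bound ij (ht i iL) hz).
have hlo : (1 - eps) * Q - mu * r ^+ 2 * (A * A - Q) <= dot (\sum_(i in L) t i) (\sum_(i in L) t i).
  have E1 : \sum_(i in L) a i * (A - a i) = A * A - Q.
    rewrite /Q (eq_bigr (fun i => a i * A - a i ^+ 2)); last by move=> i _; rewrite mulrBr expr2.
    by rewrite sumrB -mulr_suml.
  have E : (1 - eps) * Q - mu * r ^+ 2 * (A * A - Q) =
      \sum_(i in L) ((1 - eps) * a i ^+ 2 - mu * r ^+ 2 * (a i * (A - a i))).
    by rewrite sumrB -!mulr_sumr E1.
  rewrite E dot_suml; apply: ler_sum => i iL.
  rewrite dot_sumr (bigD1 i) //= -norm2_sq.
  have e2 : A - a i = \sum_(i' in L | i' != i) a i' by rewrite /A (bigD1 i) //= addrAC subrr add0r.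
  rewrite e2 mulr_sumr mulr_sumr -sumrN; apply: lerD; first exact: (hch i iL).2.1.
  apply: ler_sum => i' /andP[i'L ne].
  have ne' : i != i' by rewrite eq_sym.
  have := mu_bound ne' (ht i iL) (ht i' i'L); rewrite ler_norml => /andP[h _].
  have p : norm2 (t i) * norm2 (t i') <= (r * a i) * (r * a i').
    by apply: ler_pM; rewrite ?norm2_ge0 ?hT.
  have p2 : mu * (norm2 (t i) * norm2 (t i')) <= mu * ((r * a i) * (r * a i')) by apply: ler_wpM2l.
  have e : mu * r ^+ 2 * (a i * a i') = mu * ((r * a i) * (r * a i')) by rewrite expr2; ring.
  rewrite -mulrA -/mu in h; rewrite e; lra.
have hcs : A * A <= Q * k%:R.
  have := @cs _ 'I_n (fun i => i \in L) a (fun _ => 1).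
  have e1 : \sum_(i in L) a i * 1 = A by apply: eq_bigr => i _; rewrite mulr1.
  have e2 : \sum_(i in L) (1:R) ^+ 2 = k%:R.
    by rewrite (eq_bigr (fun=> 1)) ?expr1n // sumr_const hL.
  by rewrite /= e1 e2 -/Q expr2.
have Bs0 : 0 < Bs.
  rewrite /Bs (bigD1 i0) //=.
  have : 0 < normq q (c i0).
    rewrite lt_def normq_ge0 andbT; apply: contra ci0 => /eqP h.
    by apply/eqP; exact: normq_eq0 h.
  have : 0 <= \sum_(i | (i \notin L) && (i != i0)) normq q (c i) by apply: sumr_ge0 => *; exact: normq_ge0.
  lra.
have hAB : A < Bs.
  rewrite ltNge; apply/negP => BA.
  have ST0 : 0 <= \sum_(i in L) norm2 (t i) by apply: sumr_ge0 => *; exact: norm2_ge0.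
  have SU0 : 0 <= \sum_(j | j \notin L) norm2 (B j *m c j) by apply: sumr_ge0 => *; exact: norm2_ge0.
  have hT' : \sum_(i in L) norm2 (t i) <= r * A by rewrite /A mulr_sumr; apply: ler_sum => i iL; exact: hT.
  have hU' : \sum_(j | j \notin L) norm2 (B j *m c j) <= sv * Bs.
    by rewrite /Bs mulr_sumr; apply: ler_sum => j _; exact: hU.
  apply: (arith hup ST0 hT' SU0 hU' hlo hcs Bs0 BA hr r0 sv0 mu0 eps1 k1).
  have e : Num.sqrt ((1 + sig) / (1 + eps)) = sv / r.
    rewrite sqrtrM ?sqrtrV //; lra.
  by rewrite -e.
have [c' hc'] : exists c' : forall i : 'I_n, 'cV[R]_(m i),
    forall i, c' i = if i \in L then c i + ch i else 0.
  by exists (fun i => if i \in L then c i + ch i else 0).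
have hyc' : y = Bmul B c'.
  rewrite /Bmul (bigID (fun i => i \in L)) /= [X in _ + X]big1 ?addr0; last first.
    by move=> i /negbTE iL; rewrite hc' iL mulmx0.
  rewrite (eq_bigr (fun i => B i *m c i + t i)); last first.
    by move=> i iL; rewrite hc' iL mulmxDr (hch i iL).1.
  have et : \sum_(i in L) t i = y - \sum_(i in L) B i *m c i by rewrite /t sumrB hy.
  by rewrite big_split /= et addrC subrK.
have H := hopt c' hyc'.
have z : \sum_(i | i \notin L) normq q (c' i) = 0.
  by apply: big1 => i /negbTE iL; rewrite hc' iL normq0.
have s1 : \sum_(i < n) normq q (c i) = \sum_(i in L) normq q (c i) + Bs.
  exact: (bigID (fun i => i \in L)).
have s2 : \sum_(i < n) normq q (c' i) = \sum_(i in L) normq q (c' i).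
  by rewrite (bigID (fun i => i \in L)) /= z addr0.
have hM : \sum_(i in L) normq q (c' i) <= \sum_(i in L) normq q (c i) + A.
  rewrite /A -big_split /=; apply: ler_sum => i iL; rewrite hc' iL.
  exact: minkowski_fin.
move: s1 s2 H hM hAB.
generalize (\sum_(i < n) normq q (c i)) (\sum_(i < n) normq q (c' i))
  (\sum_(i in L) normq q (c i)) (\sum_(i in L) normq q (c' i)) => x1 x2 x3 x4.
move=> e1 e2 h1 h2 h3; lra.
Qed.
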